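(* Let $\mathbf{A} \in \mathbb{R}^{n\times d}$ be a sensing matrix, let $\mathbf{x}^* \in \mathbb{R}^d$ with $K = \|\mathbf{x}^*\|_0$, and let the measurements be $\mathbf{y} = \mathbf{A}\mathbf{x}^* + \boldsymbol{\varepsilon}$ with noise $\boldsymbol{\varepsilon} \in \mathbb{R}^n$. Pick an integer $k \ge K$ and let $\nu = 1 + \frac{\rho + \sqrt{(4+\rho)\rho}}{2}$ with $\rho = \frac{\min\{K, d-k\}}{k - K + \min\{K, d-k\}}$. Consider the iterative hard thresholding (IHT) iterates $$\mathbf{x}^{t} = \mathcal{H}_k\big(\mathbf{x}^{t-1} + \mathbf{A}^\top(\mathbf{y} - \mathbf{A}\mathbf{x}^{t-1})\big), \quad t \ge 1.$$ If the restricted isometry constant satisfies $\delta_{2k+K} \le 1/\sqrt{8\nu}$, then the sequence $(\mathbf{x}^t)$ converges to $\mathbf{x}^*$, up to the energy of the noise, with a geometric rate of $0.5$ (i.e. the error is reduced by a factor $0.5$ per iteration up to an additive term proportional to $\|\boldsymbol{\varepsilon}\|_2$).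
   Context: $\mathcal{H}_k(\mathbf{v})$ keeps the $k$ largest-in-magnitude entries of $\mathbf{v}$ and zeros the rest (ties broken lexicographically). The $r$-th restricted isometry constant $\delta_r$ of $\mathbf{A}$ is the smallest $\delta \ge 0$ such that $(1-\delta)\|\mathbf{x}\|_2^2 \le \|\mathbf{A}\mathbf{x}\|_2^2 \le (1+\delta)\|\mathbf{x}\|_2^2$ for all $r$-sparse $\mathbf{x} \in \mathbb{R}^d$. *)

(* Defs.v *)
From HB Require Import structures.
From mathcomp Require Import all_boot all_order all_algebra.
From mathcomp Require Import reals.
Set Implicit Arguments. Unset Strict Implicit. Unset Printing Implicit Defensive.
Import Order.TTheory GRing.Theory Num.Theory.
Local Open Scope ring_scope.

Section Defs.
Variable R : realType.

Definition l2norm (d : nat) (v : 'cV[R]_d) : R :=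
  Num.sqrt (\sum_(i < d) v i 0 ^+ 2).

Definition l0norm (d : nat) (v : 'cV[R]_d) : nat :=
  #|[set i : 'I_d | v i 0 != 0]|.

Definition sparse (d r : nat) (v : 'cV[R]_d) : Prop := (l0norm v <= r)%N.

(* Hard thresholding H_k: keep entry i iff fewer than k entries precede it in
   the order "larger magnitude first, ties broken by smaller index first". *)
Definition hard_thr (d k : nat) (v : 'cV[R]_d) : 'cV[R]_d :=
  let a := fun j : 'I_d => `|v j 0| in
  \col_(i < d)
    (if (#|[set j : 'I_d | ((a i < a j)%R) || (((a j == a i)%R) && (nat_of_ord j < nat_of_ord i)%N)]| < k)%N
     then v i 0 else 0).

Definition RIP (n d r : nat) (A : 'M[R]_(n, d)) (delta : R) : Prop :=
  forall x : 'cV[R]_d, sparse r x ->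
    (1 - delta) * l2norm x ^+ 2 <= l2norm (A *m x) ^+ 2 /\
    l2norm (A *m x) ^+ 2 <= (1 + delta) * l2norm x ^+ 2.

Definition is_RIC (n d r : nat) (A : 'M[R]_(n, d)) (delta : R) : Prop :=
  0 <= delta /\ RIP r A delta /\
  forall delta' : R, 0 <= delta' -> RIP r A delta' -> delta <= delta'.

Definition IHT_step (n d k : nat) (A : 'M[R]_(n, d)) (y : 'cV[R]_n)
  (x : 'cV[R]_d) : 'cV[R]_d :=
  hard_thr k (x + A^T *m (y - A *m x)).

Definition rho_of (d k K : nat) : R :=
  (minn K (d - k))%:R / ((k - K)%:R + (minn K (d - k))%:R).

Definition nu_of (d k K : nat) : R :=
  1 + (rho_of d k K + Num.sqrt ((4 + rho_of d k K) * rho_of d k K)) / 2.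

End Defs.

(* Main.v *)
Require Import Defs.
From HB Require Import structures.
From mathcomp Require Import all_boot all_order all_algebra.
From mathcomp Require Import reals.
From mathcomp Require Import ring lra zify.
Import Order.TTheory GRing.Theory Num.Theory.
Set Implicit Arguments. Unset Strict Implicit. Unset Printing Implicit Defensive.
Local Open Scope ring_scope.

Section Helpers.
Variable R : realType.

Definition dot d (u v : 'cV[R]_d) : R := \sum_(i < d) u i 0 * v i 0.
Definition nsq d (v : 'cV[R]_d) : R := dot v v.

Lemma nsq_ge0 d (v : 'cV[R]_d) : 0 <= nsq v.
Proof. by apply: sumr_ge0 => i _; rewrite -expr2 sqr_ge0. Qed.

Lemma l2normE d (v : 'cV[R]_d) : l2norm v = Num.sqrt (nsq v).
Proof. by rewrite /l2norm /nsq /dot; congr Num.sqrt; apply: eq_bigr => i _; rewrite expr2. Qed.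

Lemma l2norm_ge0 d (v : 'cV[R]_d) : 0 <= l2norm v.
Proof. by rewrite l2normE sqrtr_ge0. Qed.

Lemma l2norm_sq d (v : 'cV[R]_d) : l2norm v ^+ 2 = nsq v.
Proof. by rewrite l2normE sqr_sqrtr // nsq_ge0. Qed.

Lemma dotC d (u v : 'cV[R]_d) : dot u v = dot v u.
Proof. by apply: eq_bigr => i _; rewrite mulrC. Qed.

Lemma dotDl d (u v w : 'cV[R]_d) : dot (u + v) w = dot u w + dot v w.
Proof. by rewrite /dot -big_split; apply: eq_bigr => i _; rewrite mxE mulrDl. Qed.

Lemma dotNl d (u w : 'cV[R]_d) : dot (- u) w = - dot u w.
Proof. by rewrite /dot -sumrN; apply: eq_bigr => i _; rewrite mxE mulNr. Qed.

Lemma dotZl d a (u w : 'cV[R]_d) : dot (a *: u) w = a * dot u w.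
Proof. by rewrite /dot mulr_sumr; apply: eq_bigr => i _; rewrite mxE mulrA. Qed.

Lemma dotBl d (u v w : 'cV[R]_d) : dot (u - v) w = dot u w - dot v w.
Proof. by rewrite dotDl dotNl. Qed.

Lemma dotDr d (u v w : 'cV[R]_d) : dot w (u + v) = dot w u + dot w v.
Proof. by rewrite dotC dotDl !(dotC w). Qed.

Lemma dotBr d (u v w : 'cV[R]_d) : dot w (u - v) = dot w u - dot w v.
Proof. by rewrite dotC dotBl !(dotC w). Qed.

Lemma dotZr d a (u w : 'cV[R]_d) : dot w (a *: u) = a * dot w u.
Proof. by rewrite dotC dotZl dotC. Qed.

Lemma dot_mx d (u v : 'cV[R]_d) : dot u v = (u^T *m v) 0 0.
Proof. by rewrite /dot mxE; apply: eq_bigr => i _; rewrite mxE. Qed.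

Lemma dot_mulmx n d (A : 'M[R]_(n, d)) (w : 'cV[R]_d) (z : 'cV[R]_n) :
  dot (A *m w) z = dot w (A^T *m z).
Proof. by rewrite !dot_mx trmx_mul mulmxA. Qed.

Lemma nsqD d (u v : 'cV[R]_d) : nsq (u + v) = nsq u + 2 * dot u v + nsq v.
Proof. rewrite /nsq dotDl !dotDr (dotC v u); ring. Qed.

Lemma nsqB d (u v : 'cV[R]_d) : nsq (u - v) = nsq u - 2 * dot u v + nsq v.
Proof. rewrite /nsq dotBl !dotBr (dotC v u); ring. Qed.

Lemma nsqZ d a (u : 'cV[R]_d) : nsq (a *: u) = a ^+ 2 * nsq u.
Proof. rewrite /nsq dotZl dotZr; ring. Qed.

Lemma disc (al be X : R) : 0 <= al -> 0 <= be ->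
  (forall s, 0 <= s ^+ 2 * al - 2 * s * X + be) ->
  X <= Num.sqrt al * Num.sqrt be.
Proof.
move=> ha hb H.
have hX2 : X ^+ 2 <= al * be.
  have [al0|alp] := eqVneq al 0.
    have [X0|Xn] := eqVneq X 0; first by rewrite X0 al0; nra.
    have := H ((be + 1) / X).
    have e : (be + 1) / X * X = be + 1 by rewrite divfK.
    rewrite al0; nra.
  have alp' : 0 < al by rewrite lt_def alp ha.
  have := H (X / al).
  have e : X / al * al = X by rewrite divfK.
  nra.
rewrite -sqrtrM //.
apply: (le_trans (ler_norm X)).
by rewrite -sqrtr_sqr ler_sqrt ?mulr_ge0.
Qed.

Lemma CS d (u v : 'cV[R]_d) : dot u v <= l2norm u * l2norm v.
Proof.
rewrite !l2normE; apply: disc; rewrite ?nsq_ge0 // => s.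
have := nsq_ge0 (s *: u - v); rewrite nsqB nsqZ dotZl; lra.
Qed.

Definition supported d (v : 'cV[R]_d) (S : {set 'I_d}) :=
  forall i, i \notin S -> v i 0 = 0.

Lemma supported_card d (v : 'cV[R]_d) (S : {set 'I_d}) : supported v S -> (l0norm v <= #|S|)%N.
Proof.
move=> h; rewrite /l0norm; apply: subset_leq_card; apply/subsetP => i.
rewrite inE => nz; apply/negPn/negP => /h hi; by rewrite hi eqxx in nz.
Qed.

Lemma suppD d (u v : 'cV[R]_d) (S : {set 'I_d}) : supported u S -> supported v S -> supported (u + v) S.
Proof. by move=> hu hv i hi; rewrite mxE hu // hv // addr0. Qed.
Lemma suppB d (u v : 'cV[R]_d) (S : {set 'I_d}) : supported u S -> supported v S -> supported (u - v) S.
Proof. by move=> hu hv i hi; rewrite !mxE hu // hv // subr0. Qed.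
Lemma suppZ d a (u : 'cV[R]_d) (S : {set 'I_d}) : supported u S -> supported (a *: u) S.
Proof. by move=> hu i hi; rewrite mxE hu // mulr0. Qed.

Lemma rip_bil n d r (A : 'M[R]_(n,d)) delta (w e : 'cV[R]_d) (S : {set 'I_d}) :
  0 <= delta -> RIP r A delta -> (#|S| <= r)%N -> supported w S -> supported e S ->
  dot w e - dot (A *m w) (A *m e) <= delta * l2norm w * l2norm e.
Proof.
move=> d0 rip hS hw he.
have key : forall v, supported v S -> `|nsq v - nsq (A *m v)| <= delta * nsq v.
  move=> v hv; have [h1 h2] := rip v (leq_trans (supported_card hv) hS).
  rewrite !l2norm_sq in h1 h2; rewrite ler_norml; apply/andP; split; lra.
have -> : delta * l2norm w * l2norm e =
    Num.sqrt (delta * nsq w) * Num.sqrt (delta * nsq e).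
  rewrite !sqrtrM // !l2normE; have := sqr_sqrtr d0; rewrite expr2 => hq.
  by rewrite -{1}hq; ring.
apply: disc; rewrite ?mulr_ge0 ?nsq_ge0 // => s.
have k1 := key (s *: w + e) (suppD (suppZ s hw) he).
have k2 := key (s *: w - e) (suppB (suppZ s hw) he).
rewrite mulmxDr -!scalemxAr in k1; rewrite mulmxBr -!scalemxAr in k2.
rewrite !nsqD !nsqZ !dotZl in k1; rewrite !nsqB !nsqZ !dotZl in k2.
move: k1 k2; rewrite !ler_norml => /andP[? ?] /andP[? ?]; lra.
Qed.

Definition pre d (b : 'cV[R]_d) (i : 'I_d) : {set 'I_d} :=
  [set j | (`|b i 0| < `|b j 0|) ||
           ((`|b j 0| == `|b i 0|) && (nat_of_ord j < nat_of_ord i)%N)].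
Definition kept d k (b : 'cV[R]_d) := [set i | (#|pre b i| < k)%N].

Lemma hard_thrE d k (b : 'cV[R]_d) i :
  hard_thr k b i 0 = if i \in kept k b then b i 0 else 0.
Proof. by rewrite /hard_thr /= mxE inE. Qed.

Lemma pre_irr d (b : 'cV[R]_d) i : i \notin pre b i.
Proof. by rewrite inE ltxx eqxx ltnn. Qed.

Lemma pre_trans d (b : 'cV[R]_d) i j l :
  j \in pre b i -> l \in pre b j -> l \in pre b i.
Proof.
rewrite !inE => /orP[h1|/andP[/eqP e1 h1]] /orP[h2|/andP[/eqP e2 h2]].
- by rewrite (lt_trans h1 h2).
- by rewrite e2 h1.
- by rewrite -e1 h2.
- by rewrite e2 e1 eqxx (ltn_trans h2 h1) orbT.
Qed.

Lemma pre_total d (b : 'cV[R]_d) i j : i != j -> (j \in pre b i) || (i \in pre b j).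
Proof.
move=> nij; rewrite !inE.
case: (ltgtP `|b i 0| `|b j 0|) => //= e.
rewrite ?eqxx /=.
have : (nat_of_ord i != nat_of_ord j) by [].
by rewrite neq_ltn => /orP[->|->]; rewrite ?orbT.
Qed.

Lemma kept_mono d k (b : 'cV[R]_d) i j :
  i \in kept k b -> j \notin kept k b -> `|b j 0| <= `|b i 0|.
Proof.
rewrite !inE -leqNgt => hi hj; rewrite leNgt; apply/negP => lt.
have : (#|pre b j| <= #|pre b i|)%N.
  apply: subset_leq_card; apply/subsetP => l; rewrite !inE.
  case/orP => [h|/andP[/eqP e _]]; first by rewrite (lt_trans lt h).
  by rewrite e lt.
move=> h; have := leq_ltn_trans h hi; by rewrite ltnNge hj.
Qed.

Lemma card_pre_lt d (b : 'cV[R]_d) i : (#|pre b i| < d)%N.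
Proof.
have : pre b i \proper [set: 'I_d].
  rewrite properT; apply/eqP => e; have := pre_irr b i; by rewrite e inE.
by move/proper_card; rewrite cardsT card_ord.
Qed.

Definition rk d (b : 'cV[R]_d) (i : 'I_d) : 'I_d := Ordinal (card_pre_lt b i).

Lemma rk_inj d (b : 'cV[R]_d) : injective (rk b).
Proof.
move=> i j /(congr1 val) /= e; apply/eqP; apply: contraT => nij.
have pp : forall x y, y \in pre b x -> pre b y \proper pre b x.
  move=> x y h; apply/properP; split; last by exists y => //; exact: pre_irr.
  by apply/subsetP => l; exact: pre_trans.
case/orP: (pre_total b nij) => /pp/proper_card; by rewrite e ltnn.
Qed.

Lemma card_lt_ord d k : #|[set r : 'I_d | (r < k)%N]| = minn k d.
Proof.
case: (leqP k d) => h.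
  have -> : [set r : 'I_d | (r < k)%N] = widen_ord h @: [set: 'I_k].
    apply/setP => r; rewrite inE; apply/idP/imsetP.
      by move=> hr; exists (Ordinal hr) => //; apply: val_inj.
    by case=> x _ ->; rewrite /= ltn_ord.
  rewrite card_imset ?cardsT ?card_ord //.
  by move=> x y /(congr1 val) /= e; apply: val_inj.

have -> : [set r : 'I_d | (r < k)%N] = [set: 'I_d].
  by apply/setP => r; rewrite !inE (leq_trans (ltn_ord r) (ltnW h)).
by rewrite cardsT card_ord.
Qed.

Lemma card_kept d k (b : 'cV[R]_d) : #|kept k b| = minn k d.
Proof.
have -> : kept k b = rk b @^-1: [set r : 'I_d | (r < k)%N].
  by apply/setP => i; rewrite !inE.
by rewrite card_preimset ?card_lt_ord //; exact: rk_inj.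
Qed.

Lemma card_kept_le d k (b : 'cV[R]_d) : (#|kept k b| <= k)%N.
Proof. by rewrite card_kept geq_minl. Qed.

Lemma card_kept_eq d k (b : 'cV[R]_d) : kept k b != setT -> #|kept k b| = k /\ (k < d)%N.
Proof.
move=> h; case: (ltnP k d) => kd; first by rewrite card_kept; split=> //; apply/minn_idPl; exact: ltnW.
exfalso; move/eqP: h; apply; apply/setP => i; rewrite !inE.
exact: (leq_trans (card_pre_lt b i) kd).
Qed.

Lemma rho_ge0 d k K : 0 <= rho_of R d k K.
Proof. by rewrite /rho_of divr_ge0 ?addr_ge0 ?ler0n. Qed.

Lemma rho_le1 d k K : rho_of R d k K <= 1.
Proof.
rewrite /rho_of; set m := minn K (d - k); set g := (k - K)%N.
have [m0|mp] := posnP m; first by rewrite m0 mul0r ler01.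
rewrite ler_pdivrMr ?mul1r ?lerDr ?ler0n //.
by apply: ltr_wpDl; rewrite ?ler0n // ltr0n.
Qed.

Lemma BC d k (b : 'cV[R]_d) (T : {set 'I_d}) :
  (#|T| <= k)%N ->
  \sum_(i in T :\: kept k b) b i 0 ^+ 2 <=
  rho_of R d k #|T| * \sum_(j in kept k b :\: T) b j 0 ^+ 2.
Proof.
move=> hT; set J := kept k b.
set B := \sum_(i in T :\: J) _; set C := \sum_(j in J :\: T) _.
have C0 : 0 <= C by apply: sumr_ge0 => i _; rewrite sqr_ge0.
have B0 : 0 <= B by apply: sumr_ge0 => i _; rewrite sqr_ge0.
have [p0|ppos] := posnP #|T :\: J|.
  move/eqP: p0; rewrite cards_eq0 => /eqP e.
  by rewrite /B e big_set0 mulr_ge0 ?rho_ge0.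
have hJ : J != setT.
  move: ppos; rewrite card_gt0 => /set0Pn [i]; rewrite in_setD => /andP[hi _].
  by apply/eqP => e; move: hi; rewrite e inE.
have [cJ kd] := card_kept_eq hJ.
have hp1 : (#|T :\: J| <= #|T|)%N by apply: subset_leq_card; exact: subsetDl.
have hp2 : (#|T :\: J| <= d - k)%N.
  have : (#|T :\: J| <= #|~: J|)%N.
    by apply: subset_leq_card; rewrite setDE subsetIr.
  have := cardsC J; rewrite card_ord cJ; lia.
have hq : #|J :\: T| = (k - #|T| + #|T :\: J|)%N.
  have := cardsID J T; have := cardsID T J; rewrite setIC cJ.
  move: #|T :&: J| #|J :\: T| #|T :\: J| #|T| hT => a q p t; lia.
have dbl : B *+ #|J :\: T| <= C *+ #|T :\: J|.
  rewrite /B /C -!sumrMnl.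
  have -> : \sum_(i in T :\: J) b i 0 ^+ 2 *+ #|J :\: T| =
            \sum_(i in T :\: J) \sum_(j in J :\: T) b i 0 ^+ 2.
    by apply: eq_bigr => i _; rewrite sumr_const.
  have -> : \sum_(j in J :\: T) b j 0 ^+ 2 *+ #|T :\: J| =
            \sum_(i in T :\: J) \sum_(j in J :\: T) b j 0 ^+ 2.
    by rewrite exchange_big; apply: eq_bigr => j _; rewrite sumr_const.
  apply: ler_sum => i; rewrite in_setD => /andP[hiJ _].
  apply: ler_sum => j; rewrite in_setD => /andP[_ hjJ].
  have h := kept_mono hjJ hiJ.
  rewrite -(real_normK (num_real (b i 0))) -(real_normK (num_real (b j 0))).
  by rewrite !expr2; apply: ler_pM; rewrite ?normr_ge0.
rewrite hq -(mulr_natl B) -(mulr_natl C) natrD in dbl.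
rewrite /rho_of.
set m := minn #|T| (d - k).
have pm : (#|T :\: J| <= m)%N by rewrite leq_min hp1 hp2.
move: dbl pm ppos; set p := #|T :\: J|; set g := (k - #|T|)%N => dbl pm ppos.
have Pm : (p%:R : R) <= m%:R by rewrite ler_nat.
have P0 : (0 : R) < p%:R by rewrite ltr0n.
have G0 : (0 : R) <= g%:R by rewrite ler0n.
rewrite mulrAC ler_pdivlMr; last by lra.
have h1 : B * g%:R * (m%:R - p%:R) >= 0 by rewrite !mulr_ge0 // subr_ge0.
have h2 : m%:R * ((g%:R + p%:R) * B) <= m%:R * (p%:R * C).
  by rewrite ler_wpM2l ?ler0n.
have h3 : p%:R * (B * (g%:R + m%:R)) <= p%:R * (m%:R * C).
  have e : p%:R * (B * (g%:R + m%:R)) = m%:R * ((g%:R + p%:R) * B) - B * g%:R * (m%:R - p%:R) :> R by ring.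
  rewrite e mulrCA; lra.
by rewrite ler_pM2l in h3.
Qed.

Lemma thr_bound d (k : nat) (b x : 'cV[R]_d) (S : {set 'I_d}) :
  (l0norm x <= k)%N ->
  kept k b :|: [set i | x i 0 != 0] \subset S ->
  nsq (hard_thr k b - x) <=
  (2 + 2 * rho_of R d k (l0norm x)) * \sum_(i in S) (b i 0 - x i 0) ^+ 2.
Proof.
rewrite /l0norm.
set T := [set i | x i 0 != 0] => hT hS; set J := kept k b.
set rho := rho_of R d k #|T|.
have r0 : 0 <= rho := rho_ge0 _ _ _.
have xT : forall i, i \notin T -> x i 0 = 0 by move=> i; rewrite inE negbK => /eqP.
have hBC := BC b hT.
set E := fun i => (b i 0 - x i 0) ^+ 2.
have E0 : forall i, 0 <= E i by move=> i; rewrite /E sqr_ge0.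
have step1 : nsq (hard_thr k b - x) <=
   \sum_i ((if i \in J then E i else 0) + (if i \in T :\: J then 2 * E i else 0)) +
   2 * \sum_(i in T :\: J) b i 0 ^+ 2.
  rewrite (big_mkcond (fun i => i \in T :\: J)) /= mulr_sumr -big_split /=.
  apply: ler_sum => i _; rewrite mxE hard_thrE -/J !mxE in_setD /E.
  case: (i \in J) => /=; first by rewrite mulr0 !addr0 expr2.
  case hiT: (i \in T) => /=; last by rewrite xT ?hiT // !mulr0 !addr0 subr0 mulr0.
  have := sqr_ge0 (2 * b i 0 - x i 0); rewrite !add0r; lra.
have step2 : 2 * \sum_(i in T :\: J) b i 0 ^+ 2 <=
   \sum_i (if i \in J :\: T then 2 * rho * E i else 0).
  rewrite -(big_mkcond (fun i => i \in J :\: T)) -mulr_sumr.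
  have -> : \sum_(i in J :\: T) E i = \sum_(i in J :\: T) b i 0 ^+ 2.
    apply: eq_bigr => i; rewrite in_setD => /andP[hi _].
    by rewrite /E xT // subr0.
  by rewrite -mulrA ler_wpM2l.
have step3 : \sum_i ((if i \in J then E i else 0) + (if i \in T :\: J then 2 * E i else 0))
   + \sum_i (if i \in J :\: T then 2 * rho * E i else 0) <=
   (2 + 2 * rho) * \sum_(i in S) E i.
  rewrite (big_mkcond (fun i => i \in S)) mulr_sumr -big_split /=.
  apply: ler_sum => i _; have := E0 i.
  case hiJ : (i \in J); case hiT : (i \in T); rewrite ?in_setD ?hiJ ?hiT /=.
  - have hiS : i \in S by apply: (subsetP hS); rewrite inE hiJ.
    rewrite hiS; nra.
  - have hiS : i \in S by apply: (subsetP hS); rewrite inE hiJ.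
    rewrite hiS; nra.
  - have hiS : i \in S by apply: (subsetP hS); rewrite inE hiT orbT.
    rewrite hiS; nra.
  - by case: (i \in S) => _; rewrite !addr0 ?mulr0 // mulr_ge0 //; lra.
apply: (le_trans step1); apply: (le_trans _ step3); lra.
Qed.

Lemma sq_le (a b : R) : 0 <= a -> 0 <= b -> a ^+ 2 <= b ^+ 2 -> a <= b.
Proof. by move=> ha hb h; rewrite -(ler_pXn2r (isT : (0 < 2)%N)) ?nnegrE. Qed.

Lemma le_sq (a b : R) : 0 <= a -> a <= b -> a ^+ 2 <= b ^+ 2.
Proof. by move=> ha hb; rewrite (ler_pXn2r (isT : (0 < 2)%N)) ?nnegrE // (le_trans ha hb). Qed.

Lemma iht_step n d (A : 'M[R]_(n,d)) (xs : 'cV[R]_d) (eps : 'cV[R]_n) (k : nat)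
    delta (xt : 'cV[R]_d) :
  (l0norm xs <= k)%N -> 0 <= delta -> RIP (2 * k + l0norm xs) A delta ->
  sparse k xt ->
  sparse k (hard_thr k (xt + A^T *m ((A *m xs + eps) - A *m xt))) /\
  nsq (hard_thr k (xt + A^T *m ((A *m xs + eps) - A *m xt)) - xs) <=
     (2 + 2 * rho_of R d k (l0norm xs)) *
       (delta * l2norm (xt - xs) + Num.sqrt (1 + delta) * l2norm eps) ^+ 2.
Proof.
move=> hK d0 rip hxt.
set u := xt + _.
set T := [set i | xs i 0 != 0]; set J := kept k u.
set X := [set i | xt i 0 != 0].
set S := J :|: T :|: X.
have sJ : supported (hard_thr k u) J by move=> i hi; rewrite hard_thrE (negbTE hi).
split; first exact: (leq_trans (supported_card sJ) (card_kept_le k u)).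
have hS : (#|S| <= 2 * k + l0norm xs)%N.
  have h1 : (#|S| <= #|J :|: T| + #|X|)%N by rewrite /S cardsU leq_subr.
  have h2 : (#|J :|: T| <= #|J| + #|T|)%N by rewrite cardsU leq_subr.
  have h3 := card_kept_le k u.
  move: hxt; rewrite /sparse /l0norm -/X -/T => hxt.
  rewrite /l0norm -/T.
  move: #|S| #|J :|: T| #|X| #|J| #|T| h1 h2 h3 hxt => a b c e f; lia.
set e := xt - xs.
have sE : supported e S.
  move=> i; rewrite !inE !negb_or !negbK => /andP[/andP[_ /eqP h1] /eqP h2].
  by rewrite !mxE h1 h2 subr0.
set w : 'cV[R]_d := \col_i (if i \in S then (u - xs) i 0 else 0).
have sW : supported w S by move=> i hi; rewrite mxE (negbTE hi).
have nw1 : nsq w = \sum_(i in S) (u i 0 - xs i 0) ^+ 2.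
  rewrite /nsq /dot [RHS]big_mkcond; apply: eq_bigr => i _; rewrite !mxE.
  by case: (i \in S); rewrite ?mulr0 // expr2.
have nw2 : nsq w = dot w (u - xs).
  rewrite /nsq /dot; apply: eq_bigr => i _; rewrite !mxE.
  by case: (i \in S); rewrite ?mul0r.
have thr := thr_bound (b := u) (S := S) hK (subsetUl (J :|: T) X).
rewrite -/T -/S -nw1 in thr.
have ide : u - xs = e - A^T *m (A *m e) + A^T *m eps.
  rewrite /u /e !mulmxBr !mulmxDr.
  move: (A^T *m (A *m xs)) (A^T *m (A *m xt)) (A^T *m eps) => P Q Z.
  by apply/matrixP => i j; rewrite !mxE; ring.
have ed : dot w (u - xs) = (dot w e - dot (A *m w) (A *m e)) + dot (A *m w) eps.
  by rewrite ide dotDr dotBr -!dot_mulmx; ring.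
set W := l2norm w.
have W0 : 0 <= W := l2norm_ge0 w.
have e0 : 0 <= l2norm e := l2norm_ge0 e.
have ep0 : 0 <= l2norm eps := l2norm_ge0 eps.
have sq0 : 0 <= Num.sqrt (1 + delta) := sqrtr_ge0 _.
have b1 := rip_bil d0 rip hS sW sE.
have b2 := CS (A *m w) eps.
have b3 : l2norm (A *m w) <= Num.sqrt (1 + delta) * W.
  apply: sq_le; rewrite ?mulr_ge0 ?l2norm_ge0 //.
  have [_ h] := rip w (leq_trans (supported_card sW) hS).
  rewrite exprMn (@sqr_sqrtr _ (1 + delta)) ?addr_ge0 //.
have b4 : W ^+ 2 <= W * (delta * l2norm e + Num.sqrt (1 + delta) * l2norm eps).
  rewrite /W l2norm_sq nw2 ed.
  have : l2norm (A *m w) * l2norm eps <= Num.sqrt (1 + delta) * l2norm w * l2norm eps.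
    by rewrite ler_wpM2r.
  lra.
have b5 : W <= delta * l2norm e + Num.sqrt (1 + delta) * l2norm eps.
  set Z := _ + _ in b4 *.
  have Z0 : 0 <= Z by rewrite /Z addr_ge0 ?mulr_ge0.
  case: (ltP 0 W) => Wp; last by lra.
  by move: b4; rewrite expr2 ler_pM2l.
apply: (le_trans thr); apply: ler_wpM2l.
  by have := rho_ge0 d k (l0norm xs); lra.
by rewrite -l2norm_sq le_sq.
Qed.

Lemma num_bound (c dl s e ep : R) : 0 <= c -> c <= 4 -> c * dl ^+ 2 <= 1 / 4 ->
  0 <= dl -> dl <= 1 -> 0 <= s -> s ^+ 2 = 1 + dl -> 0 <= e -> 0 <= ep ->
  c * (dl * e + s * ep) ^+ 2 <= (e / 2 + 3 * ep) ^+ 2.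
Proof.
move=> c0 c4 hc d0 d1 s0 hs e0 ep0.
have h1 : c * s ^+ 2 <= 8 by rewrite hs; nra.
have h2 : c * dl * s <= 3 / 2.
  apply: sq_le; rewrite ?mulr_ge0 //; first lra.
  have -> : (c * dl * s) ^+ 2 = (c * dl ^+ 2) * (c * s ^+ 2) by ring.
  have : (c * dl ^+ 2) * (c * s ^+ 2) <= 1 / 4 * 8.
    by apply: ler_pM; rewrite ?mulr_ge0 ?sqr_ge0.
  lra.
have -> : c * (dl * e + s * ep) ^+ 2 =
   (c * dl ^+ 2) * e ^+ 2 + 2 * (c * dl * s) * (e * ep) + (c * s ^+ 2) * ep ^+ 2 by ring.
have k1 : (c * dl ^+ 2) * e ^+ 2 <= 1 / 4 * e ^+ 2 by rewrite ler_wpM2r ?sqr_ge0.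
have k2 : (c * dl * s) * (e * ep) <= 3 / 2 * (e * ep) by rewrite ler_wpM2r ?mulr_ge0.
have k3 : (c * s ^+ 2) * ep ^+ 2 <= 8 * ep ^+ 2 by rewrite ler_wpM2r ?sqr_ge0.
have k4 := sqr_ge0 ep.
have -> : (e / 2 + 3 * ep) ^+ 2 = 1 / 4 * e ^+ 2 + 3 * (e * ep) + 9 * ep ^+ 2 by field.
lra.
Qed.
End Helpers.

Theorem theorem2 (R : realType) :
  exists C : R, 0 <= C /\
  forall (n d : nat) (A : 'M[R]_(n, d)) (xstar : 'cV[R]_d) (eps : 'cV[R]_n)
         (k : nat) (delta : R) (x : nat -> 'cV[R]_d),
    let K := l0norm xstar in
    let y := A *m xstar + eps in
    (K <= k)%N ->
    is_RIC (2 * k + K) A delta ->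
    delta <= 1 / Num.sqrt (8 * nu_of R d k K) ->
    sparse k (x 0%N) ->
    (forall t : nat, x t.+1 = IHT_step k A y (x t)) ->
    forall t : nat,
      l2norm (x t - xstar) <= (1 / 2) ^+ t * l2norm (x 0%N - xstar) + C * l2norm eps.
Proof.
exists 6; split; first lra.
move=> n d A xs eps k delta x K y hKk hRIC hdel hx0 hrec.
have [d0 [rip _]] := hRIC.
set rho := rho_of R d k K.
have r0 : 0 <= rho := rho_ge0 R d k K.
have r1 : rho <= 1 := rho_le1 R d k K.
set nu := nu_of R d k K.
have hsq : rho <= Num.sqrt ((4 + rho) * rho).
  have q0 : 0 <= (4 + rho) * rho by apply: mulr_ge0 => //; lra.
  apply: sq_le => //; first exact: sqrtr_ge0.
  rewrite sqr_sqrtr // expr2; apply: ler_wpM2r => //; lra.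
have hnu : 2 + 2 * rho <= 2 * nu by rewrite /nu /nu_of -/rho; lra.
have nu0 : 0 < 8 * nu by lra.
have hd2 : delta ^+ 2 * (8 * nu) <= 1.
  have : delta ^+ 2 <= (1 / Num.sqrt (8 * nu)) ^+ 2 by apply: le_sq.
  rewrite expr_div_n expr1n sqr_sqrtr; last exact: ltW.
  by rewrite ler_pdivlMr.
have hc : (2 + 2 * rho) * delta ^+ 2 <= 1 / 4.
  have : (2 + 2 * rho) * delta ^+ 2 <= 2 * nu * delta ^+ 2.
    by rewrite ler_wpM2r ?sqr_ge0.
  lra.
have d1 : delta <= 1.
  have := sqr_ge0 delta; nra.
have main : forall t, sparse k (x t) /\
    l2norm (x t - xs) <= (1 / 2) ^+ t * l2norm (x 0%N - xs) + 6 * l2norm eps.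
  elim => [|t [sp IH]].
    split => //; rewrite expr0 mul1r lerDl mulr_ge0 ?l2norm_ge0 //.
  have [sp' hb] := iht_step eps hKk d0 rip sp.
  have ex : x t.+1 = hard_thr k (x t + A^T *m ((A *m xs + eps) - A *m x t)).
    by rewrite hrec.
  rewrite -ex in sp' hb; split => //.
  have nb := num_bound (c := 2 + 2 * rho) (dl := delta) (s := Num.sqrt (1 + delta))
    (e := l2norm (x t - xs)) (ep := l2norm eps).
  have : l2norm (x t.+1 - xs) <= l2norm (x t - xs) / 2 + 3 * l2norm eps.
    have := l2norm_ge0 (x t - xs); have := l2norm_ge0 eps => g1 g2.
    apply: sq_le; [exact: l2norm_ge0 | lra | ].
    rewrite l2norm_sq; apply: (le_trans hb); apply: nb; rewrite ?l2norm_ge0 ?sqrtr_ge0 //; try lra.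
    by rewrite sqr_sqrtr //; lra.
  rewrite exprS; lra.
by move=> t; case: (main t).
Qed.
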